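(* Let $m\ge2$, $n=2m+1$, $A_1=E_1+E_{m+1}$, $A_i=E_i+E_{m+i}+E_{i-1,n}+E_{m+i-1,n}$ for $i=2,\dots,m-1$, $A_m=E_m-E_{2m}+E_{m-1,n}+E_{2m-1,n}$, $B=I_{m+1}\oplus0_m$, $c=e_m\in\mathbb R^m$. Let $(D)$ be $\inf\{B\bullet Y:A_i\bullet Y=c_i\ \forall i,\ Y\succeq0\}$ and $(HD)$ the system $A_i\bullet Y=0\ (i=1,\dots,m)$, $B\bullet Y=0$, $Y\succeq0$. Then $d(D)=m-1$ and $d(HD)=m$.
   Context: $E_{ij}\in\mathcal S^n$ has only nonzero entries $1$ in positions $(i,j),(j,i)$; $E_i:=E_{ii}$; $S\bullet T=\operatorname{trace}(ST)$. For a closed convex cone $K$, $K^*=\{y:\langle y,x\rangle\ge0\ \forall x\in K\}$; a face of $K$ is a convex $F\subseteq K$ with $x,y\in K,\frac12(x+y)\in F\Rightarrow x,y\in F$. For an affine subspace $H$ with $H\cap K\ne\emptyset$, $H^\perp=\{y:\langle y,x\rangle=0\ \forall x\in H\}$, the minimal cone of $H\cap K$ is the smallest face of $K$ containing it, and the singularity degree $d(H\cap K)$ is the smallest $k$ such that there exist $y_1,\dots,y_k$ with $y_i\in F_{i-1}^*\cap H^\perp$, where $F_0=K$, $F_i=F_{i-1}\cap y_i^\perp$, and $F_k$ equals the minimal cone. $d(D)$ and $d(HD)$ denote the singularity degrees of the feasible sets of $(D)$ and $(HD)$ (intersections of the corresponding affine/linear subspaces of $\mathcal S^n$ with $\mathcal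 S^n_+$). *)

(* Defs.v *)
From HB Require Import structures.
From mathcomp Require Import all_boot all_order all_algebra.
Set Implicit Arguments. Unset Strict Implicit. Unset Printing Implicit Defensive.
Import Order.TTheory GRing.Theory Num.Theory.
Local Open Scope ring_scope.

Section SDP.
Variable R : rcfType.

Definition symm (n : nat) (Y : 'M[R]_n) : Prop := Y^T = Y.

Definition inner (n : nat) (S T : 'M[R]_n) : R := \tr (S *m T).

Definition psd (n : nat) (Y : 'M[R]_n) : Prop :=
  symm Y /\ forall x : 'cV[R]_n, 0 <= (x^T *m Y *m x) 0 0.

Definition dual_cone (n : nat) (F : 'M[R]_n -> Prop) (y : 'M[R]_n) : Prop :=
  symm y /\ forall x, F x -> 0 <= inner y x.

Definition perp (n : nat) (H : 'M[R]_n -> Prop) (y : 'M[R]_n) : Prop :=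
  symm y /\ forall x, H x -> inner y x = 0.

Definition convex (n : nat) (F : 'M[R]_n -> Prop) : Prop :=
  forall (x y : 'M[R]_n) (t : R), 0 <= t -> t <= 1 -> F x -> F y ->
    F (t *: x + (1 - t) *: y).

Definition is_face (n : nat) (K F : 'M[R]_n -> Prop) : Prop :=
  (forall x, F x -> K x) /\ convex F /\
  forall x y, K x -> K y -> F (2^-1 *: (x + y)) -> F x /\ F y.

Definition min_cone (n : nat) (H K : 'M[R]_n -> Prop) (X : 'M[R]_n) : Prop :=
  K X /\ forall F, is_face K F -> (forall Y, H Y -> K Y -> F Y) -> F X.

(* F_0 = K, F_i = F_{i-1} \cap y_i^perp ; ys i stands for y_{i+1} *)
Fixpoint fr_face (n : nat) (K : 'M[R]_n -> Prop) (ys : nat -> 'M[R]_n) (i : nat)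
  : 'M[R]_n -> Prop :=
  match i with
  | 0 => K
  | i'.+1 => fun X => fr_face K ys i' X /\ inner (ys i') X = 0
  end.

Definition fr_length_ok (n : nat) (H K : 'M[R]_n -> Prop) (k : nat) : Prop :=
  exists ys : nat -> 'M[R]_n,
    (forall i, (i < k)%N -> dual_cone (fr_face K ys i) (ys i) /\ perp H (ys i)) /\
    (forall X, fr_face K ys k X <-> min_cone H K X).

Definition sing_degree (n : nat) (H K : 'M[R]_n -> Prop) (d : nat) : Prop :=
  fr_length_ok H K d /\ forall j, (j < d)%N -> ~ fr_length_ok H K j.

(* E_{ij} with 1-based indices i, j *)
Definition Emx (n i j : nat) : 'M[R]_n :=
  \matrix_(p < n, q < n)
    (if ((p.+1 == i) && (q.+1 == j)) || ((p.+1 == j) && (q.+1 == i)) then 1 else 0).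

Definition Amx (m i : nat) : 'M[R]_(2 * m + 1) :=
  let n := (2 * m + 1)%N in
  if i == 1%N then Emx n 1 1 + Emx n (m + 1) (m + 1)
  else if i == m then
    Emx n m m - Emx n (2 * m) (2 * m) + Emx n (m - 1) n + Emx n (2 * m - 1) n
  else Emx n i i + Emx n (m + i) (m + i) + Emx n (i - 1) n + Emx n (m + i - 1) n.

Definition Bmx (m : nat) : 'M[R]_(2 * m + 1) :=
  \matrix_(p, q) (if (p == q) && (p < m + 1)%N then 1 else 0).

Definition cvec (m i : nat) : R := if i == m then 1 else 0.

Definition D_aff (m : nat) (Y : 'M[R]_(2 * m + 1)) : Prop :=
  symm Y /\ forall i, (1 <= i <= m)%N -> inner (Amx m i) Y = cvec m i.

Definition HD_lin (m : nat) (Y : 'M[R]_(2 * m + 1)) : Prop :=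
  symm Y /\ (forall i, (1 <= i <= m)%N -> inner (Amx m i) Y = 0) /\
  inner (Bmx m) Y = 0.

End SDP.

(* Main.v *)
Require Import Defs.
From HB Require Import structures.
From mathcomp Require Import all_boot all_order all_algebra.
From mathcomp Require Import ring lra zify.
Import Order.TTheory GRing.Theory Num.Theory.
Set Implicit Arguments. Unset Strict Implicit. Unset Printing Implicit Defensive.
Local Open Scope ring_scope.

Section Base.
Variable R : rcfType.

Definition ev (n a : nat) : 'cV[R]_n := \col_(k < n) ((k.+1 == a)%:R).
Definition ent (n : nat) (X : 'M[R]_n) (a b : nat) : R := ((ev n a)^T *m X *m ev n b) 0 0.
Definition rk (n : nat) (x : 'cV[R]_n) : 'M[R]_n := x *m x^T.

Lemma ev_delta n (i : 'I_n) : ev n i.+1 = delta_mx i 0.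
Proof. by apply/matrixP=> k l; rewrite ?mxE eqSS ord1 eqxx andbT. Qed.

Lemma entE n (X : 'M[R]_n) (i j : 'I_n) : ent X i.+1 j.+1 = X i j.
Proof.
rewrite /ent !ev_delta trmx_delta -rowE -colE. by rewrite ?mxE.
Qed.

Lemma ent_sym n (X : 'M[R]_n) a b : symm X -> ent X a b = ent X b a.
Proof.
move=> sX; rewrite /ent.
transitivity (((ev n a)^T *m X *m ev n b)^T 0 0). by rewrite [RHS]mxE.
by rewrite !trmx_mul !trmxK sX mulmxA.
Qed.

Lemma entD n (X Y : 'M[R]_n) a b : ent (X + Y) a b = ent X a b + ent Y a b.
Proof. by rewrite /ent mulmxDr mulmxDl mxE. Qed.
Lemma entZ n (X : 'M[R]_n) c a b : ent (c *: X) a b = c * ent X a b.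
Proof. by rewrite /ent -scalemxAr -scalemxAl mxE. Qed.
Lemma entN n (X : 'M[R]_n) a b : ent (- X) a b = - ent X a b.
Proof. by rewrite -scaleN1r entZ mulN1r. Qed.
Lemma entB n (X Y : 'M[R]_n) a b : ent (X - Y) a b = ent X a b - ent Y a b.
Proof. by rewrite entD entN. Qed.

Lemma innerC n (X Y : 'M[R]_n) : inner X Y = inner Y X.
Proof. exact: mxtrace_mulC. Qed.
Lemma innerDr n (A X Y : 'M[R]_n) : inner A (X + Y) = inner A X + inner A Y.
Proof. by rewrite /inner mulmxDr mxtraceD. Qed.
Lemma innerDl n (A B X : 'M[R]_n) : inner (A + B) X = inner A X + inner B X.
Proof. by rewrite /inner mulmxDl mxtraceD. Qed.
Lemma innerZr n (A X : 'M[R]_n) c : inner A (c *: X) = c * inner A X.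
Proof. by rewrite /inner -scalemxAr mxtraceZ. Qed.
Lemma innerZl n (A X : 'M[R]_n) c : inner (c *: A) X = c * inner A X.
Proof. by rewrite /inner -scalemxAl mxtraceZ. Qed.
Lemma innerNl n (A X : 'M[R]_n) : inner (- A) X = - inner A X.
Proof. by rewrite -scaleN1r innerZl mulN1r. Qed.
Lemma innerNr n (A X : 'M[R]_n) : inner A (- X) = - inner A X.
Proof. by rewrite -scaleN1r innerZr mulN1r. Qed.
Lemma innerBl n (A B X : 'M[R]_n) : inner (A - B) X = inner A X - inner B X.
Proof. by rewrite innerDl innerNl. Qed.

Lemma tr_rank1 n (u v : 'cV[R]_n) (X : 'M[R]_n) :
  \tr (u *m v^T *m X) = (v^T *m X *m u) 0 0.
Proof.
by rewrite -mulmxA mxtrace_mulC /mxtrace big_ord1.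
Qed.

Lemma Emx_dec n a b : Emx R n a b =
  ev n a *m (ev n b)^T + (if a == b then 0 else ev n b *m (ev n a)^T).
Proof.
apply/matrixP=> p q; rewrite !mxE big_ord1 !mxE.
case: (a =P b) => [->|nab]; rewrite ?mxE ?big_ord1 ?mxE ?addr0.
  by rewrite orbb; case: (p.+1 == b); case: (q.+1 == b); rewrite ?mulr1 ?mulr0.
case: (p.+1 =P a) => hp; case: (q.+1 =P b) => hq; case: (p.+1 =P b) => hp'; case: (q.+1 =P a) => hq' /=;
  rewrite ?mulr1 ?mulr0 ?addr0 ?add0r //; congruence.
Qed.

Lemma inner_Emx n a b (X : 'M[R]_n) :
  inner (Emx R n a b) X = ent X b a + (if a == b then 0 else ent X a b).
Proof.
rewrite /inner Emx_dec mulmxDl mxtraceD tr_rank1; congr (_ + _).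
by case: ifP; rewrite ?mul0mx ?mxtrace0 // tr_rank1.
Qed.

Lemma rk_ev n a : rk (ev n a) = Emx R n a a.
Proof. by rewrite Emx_dec eqxx addr0. Qed.

Lemma ent_Emx n c d a b : (0 < a <= n)%N -> (0 < b <= n)%N ->
  ent (Emx R n c d) a b = if ((a == c) && (b == d)) || ((a == d) && (b == c)) then 1 else 0.
Proof.
case: a => // a ha; case: b => // b hb.
have ha' : (a < n)%N by lia.
have hb' : (b < n)%N by lia.
have := entE (Emx R n c d) (Ordinal ha') (Ordinal hb'); rewrite /= => ->.
by rewrite mxE.
Qed.

Lemma trD m n (A B : 'M[R]_(m, n)) : (A + B)^T = A^T + B^T.
Proof. by apply/matrixP=> i j; rewrite !mxE. Qed.
Lemma trZ m n (A : 'M[R]_(m, n)) c : (c *: A)^T = c *: A^T.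
Proof. by apply/matrixP=> i j; rewrite !mxE. Qed.

Lemma add00 (A B : 'M[R]_1) : (A + B) 0 0 = A 0 0 + B 0 0.
Proof. by rewrite mxE. Qed.
Lemma scal00 (A : 'M[R]_1) c : (c *: A) 0 0 = c * A 0 0.
Proof. by rewrite mxE. Qed.

Lemma quadE n (X : 'M[R]_n) al be a b :
  (((al *: ev n a + be *: ev n b)^T *m X *m (al *: ev n a + be *: ev n b)) 0 0) =
  al ^+ 2 * ent X a a + al * be * (ent X a b + ent X b a) + be ^+ 2 * ent X b b.
Proof.
rewrite trD !trZ !mulmxDl !mulmxDr.
rewrite -!scalemxAl -!scalemxAr !add00 !scal00 /ent.
ring.
Qed.


Lemma psd_diag n (X : 'M[R]_n) a : psd X -> 0 <= ent X a a.
Proof. by case=> _ h; apply: h. Qed.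

Lemma psd_off n (X : 'M[R]_n) a b : symm X ->
  (forall al be, 0 <= (((al *: ev n a + be *: ev n b)^T *m X *m (al *: ev n a + be *: ev n b)) 0 0)) ->
  ent X a a = 0 -> ent X a b = 0.
Proof.
move=> sX h haa.
have hba := ent_sym a b sX.
set e := ent X a b in hba *; set d := ent X b b.
case: (e =P 0) => // /eqP ne.
have := h (- (d + 1) / (e + e)) 1.
rewrite quadE haa -hba -/d.
have ne2 : e + e != 0 by rewrite -mulr2n mulrn_eq0 negb_or ne.
have -> : - (d + 1) / (e + e) * 1 * (e + e) = - (d + 1) by field.
move=> h'; exfalso; move: h'; rewrite expr1n mulr0 add0r mul1r. lra.
Qed.

Lemma psd_offE n (X : 'M[R]_n) a b : psd X -> ent X a a = 0 -> ent X a b = 0.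
Proof. by case=> sX h; apply: psd_off => // al be; apply: h. Qed.

Lemma inner_rk n (y : 'M[R]_n) x : inner y (rk x) = (x^T *m y *m x) 0 0.
Proof. by rewrite innerC /inner /rk tr_rank1. Qed.

Lemma psd_rk n (x : 'cV[R]_n) : psd (rk x).
Proof.
split; first by rewrite /symm /rk trmx_mul trmxK.
move=> z; rewrite /rk mulmxA -mulmxA mxE big_ord1.
have -> : (x^T *m z) 0 0 = (z^T *m x) 0 0.
  by rewrite -[in LHS](trmxK z) -trmx_mul mxE.
by rewrite -expr2 sqr_ge0.
Qed.

Lemma symmD n (X Y : 'M[R]_n) : symm X -> symm Y -> symm (X + Y).
Proof. by rewrite /symm trD => -> ->. Qed.
Lemma symmZ n (X : 'M[R]_n) c : symm X -> symm (c *: X).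
Proof. by rewrite /symm trZ => ->. Qed.
Lemma symmN n (X : 'M[R]_n) : symm X -> symm (- X).
Proof. by move=> h; rewrite -scaleN1r; apply: symmZ. Qed.
Lemma symmB n (X Y : 'M[R]_n) : symm X -> symm Y -> symm (X - Y).
Proof. by move=> h1 h2; apply: symmD => //; apply: symmN. Qed.
Lemma symmE n a b : symm (Emx R n a b).
Proof. by rewrite /symm; apply/matrixP=> i j; rewrite !mxE orbC (andbC (j.+1 == a)) (andbC (j.+1 == b)). Qed.

Lemma quad_lin n (X Y : 'M[R]_n) (x : 'cV_n) s t :
  (x^T *m (s *: X + t *: Y) *m x) 0 0 = s * (x^T *m X *m x) 0 0 + t * (x^T *m Y *m x) 0 0.
Proof.
by rewrite mulmxDr mulmxDl add00 -!scalemxAr -!scalemxAl !scal00.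
Qed.

Lemma psdD n (X Y : 'M[R]_n) : psd X -> psd Y -> psd (X + Y).
Proof.
move=> [sX hX] [sY hY]; split; first exact: symmD.
move=> x; have := quad_lin X Y x 1 1; rewrite !scale1r !mul1r => ->.
by rewrite addr_ge0.
Qed.
Lemma psdZ n (X : 'M[R]_n) c : 0 <= c -> psd X -> psd (c *: X).
Proof.
move=> hc [sX hX]; split; first exact: symmZ.
by move=> x; rewrite -scalemxAr -scalemxAl scal00 mulr_ge0.
Qed.
Lemma psdE n a : psd (Emx R n a a).
Proof. by rewrite -rk_ev; apply: psd_rk. Qed.

End Base.

Section FR.
Variable R : rcfType.
Variable n : nat.
Implicit Types (X Y : 'M[R]_n) (H F : 'M[R]_n -> Prop).

Lemma fr_K (ys : nat -> 'M[R]_n) i X : fr_face (@psd R n) ys i X -> psd X.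
Proof. by elim: i X => [//|i IH] X /= [/IH]. Qed.

Lemma fr_le (ys : nat -> 'M[R]_n) i j X : (i <= j)%N -> fr_face (@psd R n) ys j X -> fr_face (@psd R n) ys i X.
Proof.
elim: j => [|j IH] hij; first by have -> : i = 0%N by lia.
case: (i =P j.+1) => [-> //|ne] /= [h _]; apply: IH => //; lia.
Qed.

Lemma fr_inner (ys : nat -> 'M[R]_n) i j X : (i < j)%N -> fr_face (@psd R n) ys j X -> inner (ys i) X = 0.
Proof. by move=> hij /(fr_le hij) [_]. Qed.

Lemma fr_contains H (ys : nat -> 'M[R]_n) k X :
  (forall i, (i < k)%N -> perp H (ys i)) -> H X -> psd X -> fr_face (@psd R n) ys k X.
Proof.
move=> hp hH hK; elim: k hp => [//|k IH] hp /=; split.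
  by apply: IH => i hi; apply: hp; lia.
by have [_ ->] := hp k (ltnSn k).
Qed.

Lemma psd_convex : convex (@psd R n).
Proof.
move=> x y t h0 h1 [sx hx] [sy hy]; split; first by apply: symmD; apply: symmZ.
move=> z; rewrite quad_lin; apply: addr_ge0; apply: mulr_ge0 => //.
by rewrite subr_ge0.
Qed.

Lemma face_K : is_face (@psd R n) (@psd R n).
Proof. split=> //; split; [exact: psd_convex|by []]. Qed.

Lemma face_step F y : is_face (@psd R n) F -> dual_cone F y ->
  is_face (@psd R n) (fun X => F X /\ inner y X = 0).
Proof.
move=> [hsub [hcv hf]] [_ hd]; split; first by move=> x [/hsub].
split.
  move=> x z t h0 h1 [fx ix] [fz iz]; split; first exact: hcv.
  by rewrite innerDr !innerZr ix iz !mulr0 addr0.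
move=> x z kx kz [fm im].
have [fx fz] := hf x z kx kz fm.
have := hd x fx; have := hd z fz.
rewrite innerZr innerDr in im.
have h2 : (2:R)^-1 != 0 by rewrite invr_eq0 pnatr_eq0.
move: im => /eqP; rewrite mulf_eq0 (negbTE h2) /= => /eqP im hz hx.
split; split => //; lra.
Qed.

Lemma fr_is_face (ys : nat -> 'M[R]_n) k :
  (forall i, (i < k)%N -> dual_cone (fr_face (@psd R n) ys i) (ys i)) ->
  is_face (@psd R n) (fr_face (@psd R n) ys k).
Proof.
elim: k => [|k IH] hd /=; first exact: face_K.
apply: face_step; last by apply: hd.
by apply: IH => i hi; apply: hd; lia.
Qed.

Lemma min_to_fr H (ys : nat -> 'M[R]_n) k X :
  (forall i, (i < k)%N -> dual_cone (fr_face (@psd R n) ys i) (ys i) /\ perp H (ys i)) ->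
  min_cone H (@psd R n) X -> fr_face (@psd R n) ys k X.
Proof.
move=> hv [_ hm]; apply: hm.
  by apply: fr_is_face => i hi; case: (hv i hi).
by move=> Y hY kY; apply: (fr_contains _ hY kY) => i hi; case: (hv i hi).
Qed.

Lemma in_min H X : H X -> psd X -> min_cone H (@psd R n) X.
Proof. by move=> hH hK; split=> // F _ hF; apply: hF. Qed.

End FR.



Ltac bcase := repeat match goal with |- context[(?x == ?y :> nat)] =>
  case: (x =P y) => ?; try (exfalso; lia) end.

Lemma eqT (x y : nat) : x = y -> (x == y) = true.
Proof. by move=> ->; rewrite eqxx. Qed.
Lemma neqF' (x y : nat) : x <> y -> (x == y) = false.
Proof. by move/eqP/negbTE. Qed.

Ltac dec := repeat match goal with |- context[(?x == ?y :> nat)] =>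
   first [rewrite (neqF' (_ : x <> y)); [|lia] | rewrite (eqT (_ : x = y)); [|lia]] end.
Ltac solve_eqs := dec; first [ match goal with |- context[(?x == ?y :> nat)] =>
   case: (x =P y) => ?; solve_eqs end | idtac ].

Section Prob.
Variable R : rcfType.
Variable m : nat.
Hypothesis hm : (2 <= m)%N.

Notation N := (2 * m + 1)%N.
Notation M := 'M[R]_(2 * m + 1).

Lemma neqF (x y : nat) : x <> y -> (x == y) = false.
Proof. by move/eqP/negbTE. Qed.

Lemma innerA i (X : M) : symm X -> (1 <= i <= m)%N -> inner (Amx R m i) X =
  if i == 1%N then ent X 1 1 + ent X (m+1) (m+1)
  else if i == m then ent X m m - ent X (2 * m) (2 * m) + 2 * ent X (m-1) N + 2 * ent X (2 * m-1) N
  else ent X i i + ent X (m+i) (m+i) + 2 * ent X (i-1) N + 2 * ent X (m+i-1) N.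
Proof.
move=> sX hi; rewrite /Amx /=.
case: ifP => _.
  by rewrite innerDl !inner_Emx !eqxx !addr0.
case: ifP => _.
  rewrite !(innerDl, innerBl, innerNl) !inner_Emx !eqxx !addr0.
  rewrite (neqF (_ : (m-1)%N <> N)); last lia.
  rewrite (neqF (_ : (2 * m-1)%N <> N)); last lia.
  rewrite (ent_sym (m-1) N sX) (ent_sym (2 * m-1) N sX); ring.
rewrite !(innerDl, innerBl, innerNl) !inner_Emx !eqxx !addr0.
rewrite (neqF (_ : (i-1)%N <> N)); last lia.
rewrite (neqF (_ : (m+i-1)%N <> N)); last lia.
rewrite (ent_sym (i-1) N sX) (ent_sym (m+i-1) N sX); ring.
Qed.

Lemma innerB (X : M) : inner (Bmx R m) X = \sum_(p < N) (if (p < m+1)%N then X p p else 0).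
Proof.
rewrite /inner /mxtrace; apply: eq_bigr => p _; rewrite mxE (bigD1 p) //= big1.
  by rewrite mxE eqxx /=; case: ifP; rewrite ?mul1r ?mul0r addr0.
by move=> q hq; rewrite mxE eq_sym (negbTE hq) mul0r.
Qed.

Lemma symmB_ : symm (Bmx R m).
Proof. rewrite /symm; apply/matrixP=> i j; rewrite !mxE; case: (i =P j) => [->|/eqP h]; first by rewrite eqxx. by rewrite eq_sym (negbTE h). Qed.

Lemma symmA i : symm (Amx R m i).
Proof.
rewrite /Amx /=; case: ifP => _; first by apply: symmD; apply: symmE.
case: ifP => _; repeat (apply: symmD || apply: symmN || apply: symmE).
Qed.

Lemma innerB_ge0 (X : M) : psd X -> 0 <= inner (Bmx R m) X.
Proof.
move=> hX; rewrite innerB; apply: sumr_ge0 => p _; case: ifP => // _.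
by rewrite -entE; apply: psd_diag.
Qed.

Lemma innerB_eq0 (X : M) : psd X -> inner (Bmx R m) X = 0 ->
  forall k, (1 <= k <= m + 1)%N -> ent X k k = 0.
Proof.
move=> hX; rewrite innerB => /psumr_eq0P h.
have hp : forall i : 'I_N, true -> 0 <= (if (i < m + 1)%N then X i i else 0).
  by move=> p _; case: ifP => // _; rewrite -entE; apply: psd_diag.
case=> // k hk.
have hk' : (k < N)%N by lia.
have := entE X (Ordinal hk') (Ordinal hk'); rewrite /= => ->.
have := h hp (Ordinal hk') isT; rewrite /=.
have -> : (k < m + 1)%N by lia.
by [].
Qed.


Lemma innerB_zero (X : M) : (forall k, (1 <= k <= m + 1)%N -> ent X k k = 0) ->
  inner (Bmx R m) X = 0.
Proof.
move=> h; rewrite innerB big1 // => p _; case: ifP => // hp.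
by rewrite -entE h //; lia.
Qed.

Definition LA (X : M) := symm X /\ forall i, (1 <= i <= m)%N -> inner (Amx R m i) X = 0.

Ltac evalE := rewrite ?(entD, entB, entZ, entN); rewrite ?ent_Emx; try lia.

Ltac Acase := match goal with |- context [if ?i == 1%N then _ else _] =>
  case: (i =P 1%N) => ?; [|case: (i =P m) => ?]; rewrite /= end.

Lemma LA_t1 l : (2 <= l <= m - 1)%N ->
  LA (2%:R *: Emx R N (m + l) (m + l) - Emx R N (m + l - 1) N).
Proof.
move=> hl; have sX : symm (2%:R *: Emx R N (m + l) (m + l) - Emx R N (m + l - 1) N).
  by apply: symmB; [apply: symmZ|]; apply: symmE.
split=> // i hi; rewrite innerA //.
Acase; evalE; solve_eqs; rewrite /=; lra.
Qed.


Ltac symmT := repeat (apply: symmD || apply: symmB || apply: symmN || apply: symmZ || apply: symmE).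

Lemma LA_t2 : LA (2%:R *: Emx R N (2 * m) (2 * m) + Emx R N (2 * m - 1) N).
Proof. split; first by symmT. move=> i hi; rewrite innerA //; last by symmT.
Acase; evalE; solve_eqs; rewrite /=; lra. Qed.

Lemma LA_t3 l : (2 <= l <= m - 1)%N ->
  LA (2%:R *: Emx R N l l - Emx R N (l - 1) N).
Proof. move=> hl; split; first by symmT. move=> i hi; rewrite innerA //; last by symmT.
Acase; evalE; solve_eqs; rewrite /=; lra. Qed.

Lemma LA_N : LA (Emx R N N N).
Proof. split; first by symmT. move=> i hi; rewrite innerA //; last by symmT.
Acase; evalE; solve_eqs; rewrite /=; lra. Qed.

Lemma LA_mm : LA (Emx R N m m + Emx R N (2 * m) (2 * m)).
Proof. split; first by symmT. move=> i hi; rewrite innerA //; last by symmT.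
Acase; evalE; solve_eqs; rewrite /=; lra. Qed.

Lemma A_Em i : (1 <= i <= m)%N -> inner (Amx R m i) (Emx R N m m) = cvec R m i.
Proof. move=> hi; rewrite innerA //; last by symmT. rewrite /cvec.
Acase; evalE; solve_eqs; rewrite /=; lra. Qed.

Lemma A_E2m i : (1 <= i <= m)%N -> inner (Amx R m i) (Emx R N (2 * m) (2 * m)) = - cvec R m i.
Proof. move=> hi; rewrite innerA //; last by symmT. rewrite /cvec.
Acase; evalE; solve_eqs; rewrite /=; lra. Qed.

Lemma A_Em1 : inner (Amx R m (m - 1)) (Emx R N (m - 1) (m - 1)) = 1.
Proof. rewrite innerA //; [|by symmT|lia]. 
Acase; evalE; solve_eqs; rewrite /=; lra. Qed.

Lemma B_t1 l : (2 <= l <= m - 1)%N ->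
  inner (Bmx R m) (2%:R *: Emx R N (m + l) (m + l) - Emx R N (m + l - 1) N) = 0.
Proof. move=> hl; apply: innerB_zero => k hk; evalE; solve_eqs; rewrite /=; lra. Qed.
Lemma B_t2 : inner (Bmx R m) (2%:R *: Emx R N (2 * m) (2 * m) + Emx R N (2 * m - 1) N) = 0.
Proof. apply: innerB_zero => k hk; evalE; solve_eqs; rewrite /=; lra. Qed.
Lemma B_N : inner (Bmx R m) (Emx R N N N) = 0.
Proof. apply: innerB_zero => k hk; evalE; solve_eqs; rewrite /=; lra. Qed.

End Prob.


Section Supp.
Variable R : rcfType.
Variable n : nat.

Definition supp (S : pred nat) (x : 'cV[R]_n) := forall k : 'I_n, ~~ S k.+1 -> x k 0 = 0.

Lemma supp_ev2 (S : pred nat) a b al be : S a -> S b -> supp S (al *: ev R n a + be *: ev R n b).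
Proof.
move=> ha hb k hk; rewrite !mxE.
case: (k.+1 =P a) => [e|_]; first by move: hk; rewrite e ha.
case: (k.+1 =P b) => [e|_]; first by move: hk; rewrite e hb.
by rewrite !mulr0 addr0.
Qed.

Lemma supp_ev (S : pred nat) a : S a -> supp S (ev R n a).
Proof.
move=> ha; have := supp_ev2 1 0 ha ha; rewrite scale1r scale0r addr0; exact.
Qed.

Lemma supp_mono (S S' : pred nat) x : (forall p, S' p -> S p) -> supp S' x -> supp S x.
Proof. move=> h hx k hk; apply: hx; apply/negP => /h; exact/negP. Qed.

Lemma quad_zero (S : pred nat) (y : 'M[R]_n) x :
  (forall p q, S p -> S q -> ent y p q = 0) -> supp S x -> (x^T *m y *m x) 0 0 = 0.
Proof.
move=> hy hx; rewrite mxE big1 // => j _; rewrite mxE.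
case: (boolP (S j.+1)) => hj; last by rewrite (hx j hj) mulr0.
rewrite big1 ?mul0r // => i _; rewrite mxE.
case: (boolP (S i.+1)) => hi; last by rewrite (hx i hi) mul0r.
by rewrite -entE hy // mulr0.
Qed.

Lemma dual_off (F : 'M[R]_n -> Prop) (S : pred nat) y p q :
  (forall x, supp S x -> F (rk x)) -> dual_cone F y -> S p -> S q ->
  ent y p p = 0 -> ent y p q = 0.
Proof.
move=> hF [sy hd] hp hq hpp; apply: psd_off => // al be.
by rewrite -inner_rk; apply: hd; apply: hF; apply: supp_ev2.
Qed.

Lemma low_step (ys : nat -> 'M[R]_n) i (S S' : pred nat) :
  (forall p, S' p -> S p) ->
  (forall x, supp S x -> fr_face (@psd R n) ys i (rk x)) ->
  (forall p, S' p -> ent (ys i) p p = 0) ->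
  dual_cone (fr_face (@psd R n) ys i) (ys i) ->
  forall x, supp S' x -> fr_face (@psd R n) ys i.+1 (rk x).
Proof.
move=> hS hF hd hdual x hx /=; split; first by apply: hF; apply: supp_mono hx.
rewrite inner_rk; apply: (quad_zero (S := S')) hx => p q hp hq.
by apply: (dual_off hF hdual); [apply: hS|apply: hS|apply: hd].
Qed.

Lemma inner_test (y : 'M[R]_n) a b c : b != n ->
  inner y (c *: Emx R n a a + Emx R n b n) = c * ent y a a + (ent y n b + ent y b n).
Proof.
move=> hb; rewrite innerC innerDl innerZl !inner_Emx eqxx addr0 (negbTE hb) //.
Qed.

End Supp.

Section Main.
Variable R : rcfType.
Variable m : nat.
Hypothesis hm : (2 <= m)%N.

Notation N := (2 * m + 1)%N.
Notation M := 'M[R]_(2 * m + 1).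
Notation K := (@psd R (2 * m + 1)).

Lemma inner_testB (y : M) a b c : b != N ->
  inner y (c *: Emx R N a a - Emx R N b N) = c * ent y a a - (ent y N b + ent y b N).
Proof.
move=> hb; rewrite innerC innerBl innerZl !inner_Emx eqxx addr0 (negbTE hb) //.
Qed.

Lemma inner_E (y : M) a : inner y (Emx R N a a) = ent y a a.
Proof. by rewrite innerC inner_Emx eqxx addr0. Qed.

Definition ysH (j : nat) : M :=
  if j == 0%N then Bmx R m else if j.+1 == m then - Amx R m m else Amx R m j.+1.

Lemma symm_ysH j : symm (ysH j).
Proof.
rewrite /ysH; case: ifP => _; first exact: symmB_.
by case: ifP => _; [apply: symmN|]; apply: symmA.
Qed.

Lemma HD_val j (X : M) : (1 <= j <= m - 1)%N -> psd X ->
  (forall k, (1 <= k <= m + j)%N -> ent X k k = 0) ->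
  inner (ysH j) X = ent X (m + j + 1) (m + j + 1).
Proof.
move=> hj hX hz; have sX := hX.1.
rewrite /ysH (neqF (_ : j <> 0%N)); last lia.
case: (j.+1 =P m) => e.
  rewrite innerNl innerA //; last lia.
  rewrite (neqF (_ : m <> 1%N)); last lia. rewrite eqxx.
  rewrite (hz m); last lia.
  rewrite (psd_offE N hX (hz (m - 1)%N _)); last lia.
  rewrite (psd_offE N hX (hz (2 * m - 1)%N _)); last lia.
  rewrite (_ : (m + j + 1 = 2 * m)%N); last lia.
  ring.
rewrite innerA //; last lia.
rewrite (neqF (_ : j.+1 <> 1%N)); last lia.
rewrite (neqF (_ : j.+1 <> m)); last lia.
rewrite (hz j.+1); last lia.
rewrite (_ : (j.+1 - 1 = j)%N); last lia.
rewrite (_ : (m + j.+1 - 1 = m + j)%N); last lia.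
rewrite (_ : (m + j.+1 = m + j + 1)%N); last lia.
rewrite (psd_offE N hX (hz j _)); last lia.
rewrite (psd_offE N hX (hz (m + j)%N _)); last lia.
ring.
Qed.

Lemma HD_face j (X : M) : (1 <= j <= m)%N -> fr_face K ysH j X ->
  forall k, (1 <= k <= m + j)%N -> ent X k k = 0.
Proof.
elim: j X => [//|j IH] X hj.
case: (j =P 0%N) => [->|nj] /=.
  move=> [hX hB] k hk; apply: (innerB_eq0 hm hX hB); lia.
move=> [hF hi] k hk.
have hz := IH X ltac:(lia) hF.
case: (k =P (m + j + 1)%N) => [->|nk]; last by apply: hz; lia.
by rewrite -HD_val //; first [lia|exact: fr_K hF|move=> k0 hk0; apply: hz].
Qed.

Lemma HD_valid i : (i < m)%N ->
  dual_cone (fr_face K ysH i) (ysH i) /\ perp (@HD_lin R m) (ysH i).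
Proof.
move=> hi; split; split; try exact: symm_ysH.
  move=> X hX; case: (i =P 0%N) => [->|ni].
    by rewrite /ysH eqxx; apply: innerB_ge0; exact: fr_K hX.
  rewrite HD_val //; [|lia|exact: fr_K hX|].
    by apply: psd_diag; exact: fr_K hX.
  by apply: HD_face hX; lia.
move=> X [sX [hA hB]]; rewrite /ysH.
case: ifP => _ //; case: ifP => /eqP e.
  by rewrite innerNl hA ?oppr0 //; lia.
by apply: hA; lia.
Qed.

Lemma HD_fr_lin (X : M) : fr_face K ysH m X -> HD_lin X.
Proof.
move=> hX; have hK := fr_K hX; split; first exact: hK.1.
split; last first.
  by have := fr_inner (ltac:(lia) : (0 < m)%N) hX; rewrite /ysH eqxx.
move=> i hi; case: (i =P 1%N) => [->|ni].
  rewrite innerA //; [|exact: hK.1|lia]; rewrite eqxx.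
  by rewrite !(HD_face _ hX) ?addr0 //; lia.
have := fr_inner (ltac:(lia) : (i - 1 < m)%N) hX; rewrite /ysH.
rewrite (neqF (_ : (i - 1)%N <> 0%N)); last lia.
rewrite (_ : (i - 1).+1 = i); last lia.
case: ifP => /eqP e //.
have ei : i = m by lia.
by rewrite ei innerNl => /eqP; rewrite oppr_eq0 => /eqP.
Qed.

Lemma HD_ok : fr_length_ok (@HD_lin R m) K m.
Proof.
exists ysH; split; first exact: HD_valid.
move=> X; split.
  by move=> hX; apply: in_min; [apply: HD_fr_lin|exact: fr_K hX].
by apply: min_to_fr; apply: HD_valid.
Qed.


Lemma HD_low j : (j < m)%N -> ~ fr_length_ok (@HD_lin R m) K j.
Proof.
move=> hj [ys [hv hfr]].
pose SH (i : nat) : pred nat := fun p => ((m + i + 1 <= p <= 2 * m)%N || (p == N)).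
have claim : forall i, (i <= j)%N -> forall x, supp (SH i) x -> fr_face K ys i (rk x).
  elim=> [|i IH] hi x hx; first exact: psd_rk.
  have [hd hp] := hv i hi.
  have IH' := IH (ltnW hi).
  apply: (low_step (S := SH i)) hx => //.
    move=> p; rewrite /SH => /orP [h|->]; last by rewrite orbT.
    by apply/orP; left; lia.
  set y := ys i.
  have yN : ent y N N = 0.
    have := hp.2 _ (conj (LA_N R hm).1 (conj (LA_N R hm).2 (B_N R hm))).
    by rewrite inner_E.
  have hSN : SH i N by rewrite /SH eqxx orbT.
  have yrow : forall p, SH i p -> ent y p N = 0.
    move=> p hpS; rewrite (ent_sym _ _ hd.1).
    exact: (dual_off IH' hd hSN hpS yN).
  move=> p; rewrite /SH => /orP [h|/eqP ->]; last exact: yN.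
  case: (p =P (2 * m)%N) => [->|np].
    have := hp.2 _ (conj (LA_t2 R hm).1 (conj (LA_t2 R hm).2 (B_t2 R hm))).
    rewrite inner_test; last by apply/eqP; lia.
    rewrite (ent_sym N _ hd.1) yrow; last by rewrite /SH; apply/orP; left; lia.
    rewrite /y; lra.
  have hl : (2 <= p - m <= m - 1)%N by lia.
  have := hp.2 _ (conj (LA_t1 R hm hl).1 (conj (LA_t1 R hm hl).2 (B_t1 R hm hl))).
  rewrite inner_testB; last by apply/eqP; lia.
  rewrite (_ : (m + (p - m))%N = p); last lia.
  rewrite (ent_sym N _ hd.1) yrow; last by rewrite /SH; apply/orP; left; lia.
  rewrite /y; lra.
have h2m : SH j (2 * m)%N by rewrite /SH; apply/orP; left; lia.
have := claim j (leqnn j) _ (@supp_ev R N _ _ h2m); rewrite rk_ev => /hfr hmin.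
have := HD_fr_lin (min_to_fr HD_valid hmin).
move=> [_ [hA _]]; have := hA m; rewrite (A_E2m R hm) //; last lia.
rewrite /cvec eqxx => /(_ ltac:(lia)) /eqP; rewrite oppr_eq0 oner_eq0 //.
Qed.

Theorem HD_deg : sing_degree (@HD_lin R m) K m.
Proof. split; [exact: HD_ok|exact: HD_low]. Qed.


Definition ysD (j : nat) : M := Amx R m j.+1.

Lemma D_val j (X : M) : (1 <= j <= m - 2)%N -> psd X ->
  (forall k, ((1 <= k <= j) || (m + 1 <= k <= m + j))%N -> ent X k k = 0) ->
  inner (ysD j) X = ent X j.+1 j.+1 + ent X (m + j + 1) (m + j + 1).
Proof.
move=> hj hX hz; have sX := hX.1.
rewrite /ysD innerA //; last lia.
rewrite (neqF (_ : j.+1 <> 1%N)); last lia.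
rewrite (neqF (_ : j.+1 <> m)); last lia.
rewrite (_ : (j.+1 - 1 = j)%N); last lia.
rewrite (_ : (m + j.+1 - 1 = m + j)%N); last lia.
rewrite (_ : (m + j.+1 = m + j + 1)%N); last lia.
rewrite (psd_offE N hX (hz j _)); last lia.
rewrite (psd_offE N hX (hz (m + j)%N _)); last lia.
ring.
Qed.

Lemma D_face j (X : M) : (1 <= j <= m - 1)%N -> fr_face K ysD j X ->
  forall k, ((1 <= k <= j) || (m + 1 <= k <= m + j))%N -> ent X k k = 0.
Proof.
elim: j X => [//|j IH] X hj.
case: (j =P 0%N) => [->|nj] /=.
  move=> [hX hA] k hk.
  move: hA; rewrite /ysD innerA //; [|exact: hX.1|lia]; rewrite eqxx => hA.
  have h1 := psd_diag 1 hX; have h2 := psd_diag (m + 1) hX.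
  have [->|->] : k = 1%N \/ k = (m + 1)%N by lia.
    lra.
  lra.
move=> [hF hi] k hk.
have hz := IH X ltac:(lia) hF.
have hK := fr_K hF.
have := D_val (ltac:(lia) : (1 <= j <= m - 2)%N) hK hz; rewrite hi => h0.
have h1 := psd_diag j.+1 hK; have h2 := psd_diag (m + j + 1) hK.
case: (k =P j.+1) => [->|nk]; first lra.
case: (k =P (m + j + 1)%N) => [->|nk']; first lra.
apply: hz; lia.
Qed.

Lemma D_valid i : (i < m - 1)%N ->
  dual_cone (fr_face K ysD i) (ysD i) /\ perp (@D_aff R m) (ysD i).
Proof.
move=> hi; split; split; try exact: symmA.
  move=> X hX; have hK := fr_K hX; case: (i =P 0%N) => [->|ni].
    rewrite /ysD innerA //; [|exact: hK.1|lia]; rewrite eqxx.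
    by apply: addr_ge0; apply: psd_diag.
  rewrite D_val //; [|lia|].
    by apply: addr_ge0; apply: psd_diag.
  by apply: D_face hX; lia.
move=> X [sX hA]; rewrite /ysD hA; last lia.
by rewrite /cvec (neqF (_ : i.+1 <> m)) //; lia.
Qed.

Lemma D_fr_min (X : M) : fr_face K ysD (m - 1) X -> min_cone (@D_aff R m) K X.
Proof.
move=> hX; have hK := fr_K hX; split => // F [_ [_ hF]] hH.
set d := inner (Amx R m m) X.
pose W : M := if d <= 1 then (1 - d) *: Emx R N m m else (d - 1) *: Emx R N (2 * m) (2 * m).
have hW : psd W.
  rewrite /W; case: ifP => hd; apply: psdZ; try apply: psdE; lra.
have hAX : forall i, (1 <= i < m)%N -> inner (Amx R m i) X = 0.
  move=> i hi; have := fr_inner (ltac:(lia) : (i - 1 < m - 1)%N) hX.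
  by rewrite /ysD (_ : (i - 1).+1 = i) //; lia.
have hAW : forall i, (1 <= i <= m)%N -> inner (Amx R m i) W = (1 - d) * cvec R m i.
  move=> i hi; rewrite /W; case: ifP => hd; rewrite innerZr.
    by rewrite (A_Em R hm).
  by rewrite (A_E2m R hm) //; ring.
have hZ : D_aff (X + W).
  split; first by apply: symmD; [exact: hK.1|exact: hW.1].
  move=> i hi; rewrite innerDr hAW //.
  case: (i =P m) => [ei|ni].
    by rewrite ei /cvec eqxx -/d; ring.
  rewrite hAX; last lia.
  by rewrite /cvec (neqF ni); ring.
have hb : psd (X + 2%:R *: W) by apply: psdD => //; apply: psdZ.
have := hF X (X + 2%:R *: W) hK hb.
have -> : 2^-1 *: (X + (X + 2%:R *: W)) = X + W.
  rewrite addrA -{1 2}[X]scale1r -scalerDl scalerDr scalerA.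
  have h2 : (2:R) != 0 by rewrite pnatr_eq0.
  rewrite -mulr2n mulVf // scale1r.
  by rewrite scalerA mulVf // scale1r.
by case=> //; apply: hH => //; apply: psdD.
Qed.

Lemma D_ok : fr_length_ok (@D_aff R m) K (m - 1).
Proof.
exists ysD; split; first exact: D_valid.
move=> X; split; first exact: D_fr_min.
by apply: min_to_fr; apply: D_valid.
Qed.


Lemma D_perpLA (y : M) Z : perp (@D_aff R m) y -> LA Z -> inner y Z = 0.
Proof.
move=> [sy hy] [sZ hZ].
have hE : D_aff (Emx R N m m) by split; [apply: symmE|move=> i hi; apply: (A_Em R hm)].
have hEZ : D_aff (Emx R N m m + Z).
  split; first by apply: symmD => //; apply: symmE.
  by move=> i hi; rewrite innerDr hZ // addr0 (A_Em R hm).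
have := hy _ hEZ; rewrite innerDr (hy _ hE) add0r //.
Qed.

Lemma D_low j : (j < m - 1)%N -> ~ fr_length_ok (@D_aff R m) K j.
Proof.
move=> hj [ys [hv hfr]].
pose SD (i : nat) : pred nat := fun p =>
  [|| (i + 1 <= p <= m)%N, (m + i + 1 <= p <= 2 * m)%N | (p == N)].
have claim : forall i, (i <= j)%N -> forall x, supp (SD i) x -> fr_face K ys i (rk x).
  elim=> [|i IH] hi x hx; first exact: psd_rk.
  have [hd hp] := hv i hi.
  have IH' := IH (ltnW hi).
  apply: (low_step (S := SD i)) hx => //.
    move=> p; rewrite /SD => /or3P [h|h|->]; last by rewrite !orbT.
      by apply/orP; left; lia.
    by apply/orP; right; apply/orP; left; lia.
  set y := ys i.
  have yN : ent y N N = 0.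
    by have := D_perpLA hp (LA_N R hm); rewrite inner_E.
  have ym : ent y m m = 0.
    have hE : D_aff (Emx R N m m) by split; [apply: symmE|move=> k hk; apply: (A_Em R hm)].
    by have := hp.2 _ hE; rewrite inner_E.
  have y2m : ent y (2 * m) (2 * m) = 0.
    have := D_perpLA hp (LA_mm R hm); rewrite innerDr !inner_E ym add0r //.
  have hSN : SD i N by rewrite /SD eqxx !orbT.
  have yrow : forall p, SD i p -> ent y p N = 0.
    move=> p hpS; rewrite (ent_sym _ _ hd.1).
    exact: (dual_off IH' hd hSN hpS yN).
  move=> p; rewrite /SD => /or3P [h|h|/eqP ->]; last exact: yN.
    case: (p =P m) => [->|np]; first exact: ym.
    have hl : (2 <= p <= m - 1)%N by lia.
    have := D_perpLA hp (LA_t3 R hm hl).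
    rewrite inner_testB; last by apply/eqP; lia.
    rewrite (ent_sym N _ hd.1) yrow; last by rewrite /SD; apply/orP; left; lia.
    rewrite /y; lra.
  case: (p =P (2 * m)%N) => [->|np]; first exact: y2m.
  have hl : (2 <= p - m <= m - 1)%N by lia.
  have := D_perpLA hp (LA_t1 R hm hl).
  rewrite inner_testB; last by apply/eqP; lia.
  rewrite (_ : (m + (p - m))%N = p); last lia.
  rewrite (ent_sym N _ hd.1) yrow; last by rewrite /SD; apply/orP; right; apply/orP; left; lia.
  rewrite /y; lra.
have hm1 : SD j (m - 1)%N by rewrite /SD; apply/orP; left; lia.
have := claim j (leqnn j) _ (@supp_ev R N _ _ hm1); rewrite rk_ev => /hfr hmin.
have := fr_inner (ltac:(lia) : (m - 2 < m - 1)%N) (min_to_fr D_valid hmin).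
rewrite /ysD (_ : (m - 2).+1 = (m - 1)%N); last lia.
by rewrite (A_Em1 R hm) => /eqP; rewrite oner_eq0.
Qed.

Theorem D_deg : sing_degree (@D_aff R m) K (m - 1).
Proof. split; [exact: D_ok|exact: D_low]. Qed.

End Main.


Unset Implicit Arguments.

Theorem theorem3 (R : rcfType) (m : nat) (hm : (2 <= m)%N) :
  sing_degree (@D_aff R m) (@psd R (2 * m + 1)) (m - 1) /\
  sing_degree (@HD_lin R m) (@psd R (2 * m + 1)) m.
Proof. split; [exact: D_deg|exact: HD_deg]. Qed.
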